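(* Let $\mathscr{V}$ be a braided monoidal category, let $A=(A,\mu_A,\eta_A)$ be a monoid and $B=(B,\mu_B,\eta_B,\delta_B,\varepsilon_B)$ a bimonoid in $\mathscr{V}$, and let $(\gamma,\tau)$ be a twisted right coaction of $B$ on $A$. Define $$z=(\eta_A\otimes 1_B)\bullet\gamma\colon B\otimes A\to A\otimes B,\qquad d=(\eta_A\otimes\delta_B)\bullet\tau\colon B\to A\otimes B\otimes B,\qquad w=\eta_A\circ\varepsilon_B\colon B\to A,$$ where the first dot product is taken in the monoid $A\otimes B$ (with $\eta_A\otimes 1_B\colon B\cong I\otimes B\to A\otimes B$) and the second in the monoid $A\otimes B\otimes B$ (with $B\otimes I\cong B$). Then $(B,d,w,z)$ is a mixed opwreath around the monoid $A$ in $\mathscr{V}$.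
   Context: Associativity and unit constraints of $\mathscr{V}$ are suppressed; $c$ denotes the braiding. For monoids $M,N$, $M\otimes N$ is a monoid with multiplication $(\mu_M\otimes\mu_N)\circ(1_M\otimes c_{N,M}\otimes 1_N)$ and unit $\eta_M\otimes\eta_N$. A bimonoid $B$ is a monoid and comonoid $(B,\delta_B,\varepsilon_B)$ such that $\delta_B\colon B\to B\otimes B$ and $\varepsilon_B\colon B\to I$ are monoid morphisms. For a monoid $M$ and morphisms $u\colon X\to M$, $v\colon Y\to M$, the dot product is $u\bullet v=\mu_M\circ(u\otimes v)\colon X\otimes Y\to M$. A twisted right coaction of the bimonoid $B$ on the monoid $A$ consists of a monoid morphism $\gamma\colon A\to A\otimes B$ and a morphism $\tau\colon I\to A\otimes B\otimes B$ such that: (counitality) $(1_A\otimes\varepsilon_B)\circ\gamma=1_A$; ($\tau$-coassociativity) $\tau\bullet((\gamma\otimes 1_B)\circ\gamma)=((1_A\otimes\delta_B)\circ\gamma)\bullet\tau$ (morphisms $A\to A\otimes B\otimes B$, dot in the monoid $A\otimes B\otimes B$); (2-cocyclicity) $((1_A\otimes\delta_B\otimes 1_B)\circ\tau)\bullet(\tau\otimes\eta_B)=((1_{A\otimes B}\otimes\delta_B)\circ\tau)\bullet((\gamma\otimes 1_{B\otimes B})\circ\tau)$ (morphisms $I\to A\otimes B^{\otimes 3}$, dot in $A\otimes B^{\otimes 3}$); (normality) $(1_{A\otimes B}\otimes\varepsilon_B)\circ\tau=\eta_A\otimes\eta_B=(1_A\otimes\varepsilon_B\otimes 1_B)\circ\tau$.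 ($\tau$ is not required to be $\bullet$-invertible.) A mixed opwreath around a monoid $A=(A,m,j)$ in $\mathscr{V}$ is a quadruple $(C,d,w,z)$ of an object $C$ and morphisms $d\colon C\to A\otimes C\otimes C$, $w\colon C\to A$, $z\colon C\otimes A\to A\otimes C$ satisfying: (1) $z\circ(1_C\otimes m)=(m\otimes 1_C)\circ(1_A\otimes z)\circ(z\otimes 1_A)$; (2) $z\circ(1_C\otimes j)=j\otimes 1_C$; (3) $m\circ(w\otimes 1_A)=m\circ(1_A\otimes w)\circ z$; (4) $(m\otimes 1_{C\otimes C})\circ(1_A\otimes z\otimes 1_C)\circ(1_{A\otimes C}\otimes z)\circ(d\otimes 1_A)=(m\otimes 1_{C\otimes C})\circ(1_A\otimes d)\circ z$; (5) $(m\otimes 1_{C^{\otimes 3}})\circ(1_A\otimes d\otimes 1_C)\circ d=(m\otimes 1_{C^{\otimes 3}})\circ(1_A\otimes z\otimes 1_{C\otimes C})\circ(1_{A\otimes C}\otimes d)\circ d$; (6) $(m\otimes 1_C)\circ(1_A\otimes w\otimes 1_C)\circ d=j\otimes 1_C$; (7) $(m\otimes 1_C)\circ(1_A\otimes z)\circ(1_{A\otimes C}\otimes w)\circ d=j\otimes 1_C$. *)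

(* Defs.v *)
(* Convention: n-fold tensor products are bracketed to the RIGHT,
   e.g.  A (x) B (x) B := A (x) (B (x) B). *)

Set Implicit Arguments.
Unset Strict Implicit.

Record BMC : Type := {
  Ob : Type;
  Hom : Ob -> Ob -> Type;
  comp : forall a b c : Ob, Hom b c -> Hom a b -> Hom a c;
  idm : forall a : Ob, Hom a a;
  ten : Ob -> Ob -> Ob;
  tenm : forall a b c d : Ob, Hom a b -> Hom c d -> Hom (ten a c) (ten b d);
  tunit : Ob;
  asc  : forall a b c : Ob, Hom (ten (ten a b) c) (ten a (ten b c));
  asci : forall a b c : Ob, Hom (ten a (ten b c)) (ten (ten a b) c);
  lu   : forall a : Ob, Hom (ten tunit a) a;
  lui  : forall a : Ob, Hom a (ten tunit a);
  ru   : forall a : Ob, Hom (ten a tunit) a;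
  rui  : forall a : Ob, Hom a (ten a tunit);
  br   : forall a b : Ob, Hom (ten a b) (ten b a);
  bri  : forall a b : Ob, Hom (ten b a) (ten a b)
}.

Arguments Hom {_} _ _.
Arguments comp {_ _ _ _} _ _.
Arguments idm {_} _.
Arguments ten {_} _ _.
Arguments tenm {_ _ _ _ _} _ _.
Arguments tunit {_}.
Arguments asc {_} _ _ _.
Arguments asci {_} _ _ _.
Arguments lu {_} _.
Arguments lui {_} _.
Arguments ru {_} _.
Arguments rui {_} _.
Arguments br {_} _ _.
Arguments bri {_} _ _.

Declare Scope bmc_scope.
Open Scope bmc_scope.
Notation "g ∘ f" := (comp g f) (at level 40, left associativity) : bmc_scope.
Notation "f ⊗ g" := (tenm f g) (at level 30, right associativity) : bmc_scope.
Notation "a ⊠ b" := (ten a b) (at level 30, right associativity) : bmc_scope.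

Record is_braided_monoidal (C : BMC) : Prop := {
  comp_assoc : forall (a b c d : Ob C) (f : Hom a b) (g : Hom b c) (h : Hom c d),
      h ∘ (g ∘ f) = (h ∘ g) ∘ f;
  comp_id_l : forall (a b : Ob C) (f : Hom a b), idm b ∘ f = f;
  comp_id_r : forall (a b : Ob C) (f : Hom a b), f ∘ idm a = f;
  ten_id : forall a b : Ob C, (idm a ⊗ idm b) = idm (a ⊠ b);
  ten_comp : forall (a1 a2 a3 b1 b2 b3 : Ob C) (f1 : Hom a1 a2) (f2 : Hom a2 a3)
      (g1 : Hom b1 b2) (g2 : Hom b2 b3),
      ((f2 ∘ f1) ⊗ (g2 ∘ g1)) = (f2 ⊗ g2) ∘ (f1 ⊗ g1);
  asc_nat : forall (a a' b b' c c' : Ob C) (f : Hom a a') (g : Hom b b') (h : Hom c c'),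
      asc a' b' c' ∘ ((f ⊗ g) ⊗ h) = (f ⊗ (g ⊗ h)) ∘ asc a b c;
  asc_asci : forall a b c : Ob C, asc a b c ∘ asci a b c = idm _;
  asci_asc : forall a b c : Ob C, asci a b c ∘ asc a b c = idm _;
  lu_nat : forall (a a' : Ob C) (f : Hom a a'), lu a' ∘ (idm tunit ⊗ f) = f ∘ lu a;
  lu_lui : forall a : Ob C, lu a ∘ lui a = idm _;
  lui_lu : forall a : Ob C, lui a ∘ lu a = idm _;
  ru_nat : forall (a a' : Ob C) (f : Hom a a'), ru a' ∘ (f ⊗ idm tunit) = f ∘ ru a;
  ru_rui : forall a : Ob C, ru a ∘ rui a = idm _;
  rui_ru : forall a : Ob C, rui a ∘ ru a = idm _;
  pentagon : forall a b c d : Ob C,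
      asc a b (c ⊠ d) ∘ asc (a ⊠ b) c d
      = (idm a ⊗ asc b c d) ∘ asc a (b ⊠ c) d ∘ (asc a b c ⊗ idm d);
  triangle : forall a b : Ob C,
      (idm a ⊗ lu b) ∘ asc a tunit b = (ru a ⊗ idm b);
  br_nat : forall (a a' b b' : Ob C) (f : Hom a a') (g : Hom b b'),
      br a' b' ∘ (f ⊗ g) = (g ⊗ f) ∘ br a b;
  br_bri : forall a b : Ob C, br a b ∘ bri a b = idm _;
  bri_br : forall a b : Ob C, bri a b ∘ br a b = idm _;
  hexagon1 : forall a b c : Ob C,
      asc b c a ∘ br a (b ⊠ c) ∘ asc a b c
      = (idm b ⊗ br a c) ∘ asc b a c ∘ (br a b ⊗ idm c);
  hexagon2 : forall a b c : Ob C,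
      asci c a b ∘ br (a ⊠ b) c ∘ asci a b c
      = (br a c ⊗ idm b) ∘ asci a c b ∘ (idm a ⊗ br b c)
}.

Section Monoidal.
Variable C : BMC.

Definition is_monoid (M : Ob C) (m : Hom (M ⊠ M) M) (e : Hom tunit M) : Prop :=
  m ∘ (m ⊗ idm M) = m ∘ (idm M ⊗ m) ∘ asc M M M
  /\ m ∘ (e ⊗ idm M) = lu M
  /\ m ∘ (idm M ⊗ e) = ru M.

Definition is_comonoid (B : Ob C) (del : Hom B (B ⊠ B)) (eps : Hom B tunit) : Prop :=
  asc B B B ∘ (del ⊗ idm B) ∘ del = (idm B ⊗ del) ∘ del
  /\ lu B ∘ (eps ⊗ idm B) ∘ del = idm B
  /\ ru B ∘ (idm B ⊗ eps) ∘ del = idm B.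

Definition is_monoid_morphism (M N : Ob C) (m : Hom (M ⊠ M) M) (e : Hom tunit M)
    (n : Hom (N ⊠ N) N) (u : Hom tunit N) (f : Hom M N) : Prop :=
  f ∘ m = n ∘ (f ⊗ f) /\ f ∘ e = u.

(* Multiplication of the tensor product monoid M (x) N:
   (mu_M (x) mu_N) o (1_M (x) c_{N,M} (x) 1_N), with the associativity
   constraints written out. *)
Definition tensor_mult (M N : Ob C) (mM : Hom (M ⊠ M) M) (mN : Hom (N ⊠ N) N)
    : Hom ((M ⊠ N) ⊠ (M ⊠ N)) (M ⊠ N) :=
  (mM ⊗ mN) ∘ asci M M (N ⊠ N) ∘ (idm M ⊗ asc M N N)
  ∘ (idm M ⊗ (br N M ⊗ idm N)) ∘ (idm M ⊗ asci N M N) ∘ asc M N (M ⊠ N).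

Definition tensor_unit (M N : Ob C) (eM : Hom tunit M) (eN : Hom tunit N)
    : Hom tunit (M ⊠ N) :=
  (eM ⊗ eN) ∘ lui tunit.

Definition unit_mult : Hom (tunit ⊠ tunit) (tunit : Ob C) := lu tunit.

Definition dot (M X Y : Ob C) (mu : Hom (M ⊠ M) M) (u : Hom X M) (v : Hom Y M)
    : Hom (X ⊠ Y) M :=
  mu ∘ (u ⊗ v).

Definition is_bimonoid (B : Ob C) (mB : Hom (B ⊠ B) B) (eB : Hom tunit B)
    (del : Hom B (B ⊠ B)) (eps : Hom B tunit) : Prop :=
  is_monoid mB eB /\ is_comonoid del eps
  /\ is_monoid_morphism mB eB (tensor_mult mB mB) (tensor_unit eB eB) del
  /\ is_monoid_morphism mB eB unit_mult (idm tunit) eps.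

Section Twisted.
Variables (A B : Ob C) (mA : Hom (A ⊠ A) A) (eA : Hom tunit A)
          (mB : Hom (B ⊠ B) B) (eB : Hom tunit B)
          (del : Hom B (B ⊠ B)) (eps : Hom B tunit).

Definition mAB : Hom ((A ⊠ B) ⊠ (A ⊠ B)) (A ⊠ B) := tensor_mult mA mB.
Definition eAB : Hom tunit (A ⊠ B) := tensor_unit eA eB.
Definition mBB : Hom ((B ⊠ B) ⊠ (B ⊠ B)) (B ⊠ B) := tensor_mult mB mB.
Definition eBB : Hom tunit (B ⊠ B) := tensor_unit eB eB.
Definition mABB : Hom ((A ⊠ B ⊠ B) ⊠ (A ⊠ B ⊠ B)) (A ⊠ B ⊠ B) := tensor_mult mA mBB.
Definition mBBB : Hom ((B ⊠ B ⊠ B) ⊠ (B ⊠ B ⊠ B)) (B ⊠ B ⊠ B) := tensor_mult mB mBB.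
Definition mABBB : Hom ((A ⊠ B ⊠ B ⊠ B) ⊠ (A ⊠ B ⊠ B ⊠ B)) (A ⊠ B ⊠ B ⊠ B) :=
  tensor_mult mA mBBB.

Definition is_twisted_coaction (gamma : Hom A (A ⊠ B)) (tau : Hom tunit (A ⊠ B ⊠ B))
    : Prop :=
  is_monoid_morphism mA eA mAB eAB gamma
  /\ ru A ∘ (idm A ⊗ eps) ∘ gamma = idm A
  /\ dot mABB tau (asc A B B ∘ (gamma ⊗ idm B) ∘ gamma) ∘ lui A
     = dot mABB ((idm A ⊗ del) ∘ gamma) tau ∘ rui A
  /\ dot mABBB ((idm A ⊗ (asc B B B ∘ (del ⊗ idm B))) ∘ tau)
               ((idm A ⊗ asc B B B) ∘ asc A (B ⊠ B) B ∘ (tau ⊗ eB) ∘ lui tunit) ∘ lui tunit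
     = dot mABBB ((idm A ⊗ (idm B ⊗ del)) ∘ tau)
               (asc A B (B ⊠ B) ∘ (gamma ⊗ idm (B ⊠ B)) ∘ tau) ∘ lui tunit
  /\ (idm A ⊗ ru B) ∘ (idm A ⊗ (idm B ⊗ eps)) ∘ tau = (eA ⊗ eB) ∘ lui tunit
  /\ (idm A ⊗ lu B) ∘ (idm A ⊗ (eps ⊗ idm B)) ∘ tau = (eA ⊗ eB) ∘ lui tunit.

Definition z_of (gamma : Hom A (A ⊠ B)) : Hom (B ⊠ A) (A ⊠ B) :=
  dot mAB ((eA ⊗ idm B) ∘ lui B) gamma.

Definition d_of (tau : Hom tunit (A ⊠ B ⊠ B)) : Hom B (A ⊠ B ⊠ B) :=
  dot mABB ((eA ⊗ del) ∘ lui B) tau ∘ rui B.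

Definition w_of : Hom B A := eA ∘ eps.

End Twisted.

Definition is_mixed_opwreath (A : Ob C) (m : Hom (A ⊠ A) A) (j : Hom tunit A)
    (C0 : Ob C) (d : Hom C0 (A ⊠ C0 ⊠ C0)) (w : Hom C0 A) (z : Hom (C0 ⊠ A) (A ⊠ C0))
    : Prop :=
  z ∘ (idm C0 ⊗ m)
    = (m ⊗ idm C0) ∘ asci A A C0 ∘ (idm A ⊗ z) ∘ asc A C0 A ∘ (z ⊗ idm A)
      ∘ asci C0 A A
  /\ z ∘ (idm C0 ⊗ j) ∘ rui C0 = (j ⊗ idm C0) ∘ lui C0
  /\ m ∘ (w ⊗ idm A) = m ∘ (idm A ⊗ w) ∘ z
  /\ (m ⊗ idm (C0 ⊠ C0)) ∘ asci A A (C0 ⊠ C0)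
       ∘ (idm A ⊗ asc A C0 C0) ∘ (idm A ⊗ (z ⊗ idm C0)) ∘ (idm A ⊗ asci C0 A C0)
       ∘ (idm A ⊗ (idm C0 ⊗ z)) ∘ (idm A ⊗ asc C0 C0 A) ∘ asc A (C0 ⊠ C0) A
       ∘ (d ⊗ idm A)
     = (m ⊗ idm (C0 ⊠ C0)) ∘ asci A A (C0 ⊠ C0) ∘ (idm A ⊗ d) ∘ z
  /\ (m ⊗ idm (C0 ⊠ C0 ⊠ C0)) ∘ asci A A (C0 ⊠ C0 ⊠ C0)
       ∘ (idm A ⊗ (idm A ⊗ asc C0 C0 C0)) ∘ (idm A ⊗ asc A (C0 ⊠ C0) C0)
       ∘ (idm A ⊗ (d ⊗ idm C0)) ∘ d
     = (m ⊗ idm (C0 ⊠ C0 ⊠ C0)) ∘ asci A A (C0 ⊠ C0 ⊠ C0)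
       ∘ (idm A ⊗ asc A C0 (C0 ⊠ C0)) ∘ (idm A ⊗ (z ⊗ idm (C0 ⊠ C0)))
       ∘ (idm A ⊗ asci C0 A (C0 ⊠ C0)) ∘ (idm A ⊗ (idm C0 ⊗ d)) ∘ d
  /\ (m ⊗ idm C0) ∘ asci A A C0 ∘ (idm A ⊗ (w ⊗ idm C0)) ∘ d = (j ⊗ idm C0) ∘ lui C0
  /\ (m ⊗ idm C0) ∘ asci A A C0 ∘ (idm A ⊗ z) ∘ (idm A ⊗ (idm C0 ⊗ w)) ∘ d
     = (j ⊗ idm C0) ∘ lui C0.

End Monoidal.

(* Main.v *)
Require Import Defs.
From Stdlib Require Import Setoid.
Set Implicit Arguments.
Unset Strict Implicit.

Existing Class is_braided_monoidal.
Section Main.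
Context {C : BMC} {HC : is_braided_monoidal C}.

Lemma cA {a b c d : Ob C} (f : Hom a b) (g : Hom b c) (h : Hom c d) : h ∘ (g ∘ f) = h ∘ g ∘ f.
Proof. exact (comp_assoc HC f g h). Qed.
Lemma cidl {a b : Ob C} (f : Hom a b) : idm b ∘ f = f. Proof. exact (comp_id_l HC f). Qed.
Lemma cidr {a b : Ob C} (f : Hom a b) : f ∘ idm a = f. Proof. exact (comp_id_r HC f). Qed.
Lemma tid (a b : Ob C) : (idm a ⊗ idm b) = idm (a ⊠ b). Proof. exact (ten_id HC a b). Qed.
Lemma tc {a1 a2 a3 b1 b2 b3 : Ob C} (f1 : Hom a1 a2) (f2 : Hom a2 a3) (g1 : Hom b1 b2) (g2 : Hom b2 b3) :
  ((f2 ∘ f1) ⊗ (g2 ∘ g1)) = (f2 ⊗ g2) ∘ (f1 ⊗ g1).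
Proof. exact (ten_comp HC f1 f2 g1 g2). Qed.

Lemma ctx2 {a b c d : Ob C} (f1 : Hom b c) (f2 : Hom a b) (h : Hom a c) (k : Hom c d) :
  f1 ∘ f2 = h -> k ∘ f1 ∘ f2 = k ∘ h.
Proof. intros E; rewrite <- E; now rewrite cA. Qed.
Lemma ctx3 {a b c e d : Ob C} (f1 : Hom c e) (f2 : Hom b c) (f3 : Hom a b) (h : Hom a e) (k : Hom e d) :
  f1 ∘ f2 ∘ f3 = h -> k ∘ f1 ∘ f2 ∘ f3 = k ∘ h.
Proof. intros E; rewrite <- E; now rewrite !cA. Qed.
Lemma ctx4 {a b c e g d : Ob C} (f0 : Hom e g) (f1 : Hom c e) (f2 : Hom b c) (f3 : Hom a b) (h : Hom a g) (k : Hom g d) :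
  f0 ∘ f1 ∘ f2 ∘ f3 = h -> k ∘ f0 ∘ f1 ∘ f2 ∘ f3 = k ∘ h.
Proof. intros E; rewrite <- E; now rewrite !cA. Qed.
Lemma ctx5 {a b c e g i d : Ob C} (f' : Hom g i) (f0 : Hom e g) (f1 : Hom c e) (f2 : Hom b c) (f3 : Hom a b) (h : Hom a i) (k : Hom i d) :
  f' ∘ f0 ∘ f1 ∘ f2 ∘ f3 = h -> k ∘ f' ∘ f0 ∘ f1 ∘ f2 ∘ f3 = k ∘ h.
Proof. intros E; rewrite <- E; now rewrite !cA. Qed.
Lemma ctx6 {a b c e g i j d : Ob C} (f'' : Hom i j) (f' : Hom g i) (f0 : Hom e g) (f1 : Hom c e) (f2 : Hom b c) (f3 : Hom a b) (h : Hom a j) (k : Hom j d) :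
  f'' ∘ f' ∘ f0 ∘ f1 ∘ f2 ∘ f3 = h -> k ∘ f'' ∘ f' ∘ f0 ∘ f1 ∘ f2 ∘ f3 = k ∘ h.
Proof. intros E; rewrite <- E; now rewrite !cA. Qed.
Lemma ctx7 {a b c e g i j l d : Ob C} (f3' : Hom j l) (f'' : Hom i j) (f' : Hom g i) (f0 : Hom e g) (f1 : Hom c e) (f2 : Hom b c) (f3 : Hom a b) (h : Hom a l) (k : Hom l d) :
  f3' ∘ f'' ∘ f' ∘ f0 ∘ f1 ∘ f2 ∘ f3 = h -> k ∘ f3' ∘ f'' ∘ f' ∘ f0 ∘ f1 ∘ f2 ∘ f3 = k ∘ h.
Proof. intros E; rewrite <- E; now rewrite !cA. Qed.
Lemma ctx8 {a b c e g i j l m d : Ob C} (f4' : Hom l m) (f3' : Hom j l) (f'' : Hom i j) (f' : Hom g i) (f0 : Hom e g) (f1 : Hom c e) (f2 : Hom b c) (f3 : Hom a b) (h : Hom a m) (k : Hom m d) :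
  f4' ∘ f3' ∘ f'' ∘ f' ∘ f0 ∘ f1 ∘ f2 ∘ f3 = h -> k ∘ f4' ∘ f3' ∘ f'' ∘ f' ∘ f0 ∘ f1 ∘ f2 ∘ f3 = k ∘ h.
Proof. intros E; rewrite <- E; now rewrite !cA. Qed.

Ltac nrm := repeat rewrite cA.
Tactic Notation "lrw" open_constr(L) :=
  first [ rewrite (ctx8 _ L) | rewrite (ctx7 _ L) | rewrite (ctx6 _ L) | rewrite (ctx5 _ L)
        | rewrite (ctx4 _ L) | rewrite (ctx3 _ L) | rewrite (ctx2 _ L) | rewrite L ]; nrm.

Lemma ascn {a a' b b' c c' : Ob C} (f : Hom a a') (g : Hom b b') (h : Hom c c') :
  asc a' b' c' ∘ ((f ⊗ g) ⊗ h) = (f ⊗ (g ⊗ h)) ∘ asc a b c.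
Proof. exact (asc_nat HC f g h). Qed.
Lemma aai (a b c : Ob C) : asc a b c ∘ asci a b c = idm _. Proof. exact (asc_asci HC a b c). Qed.
Lemma aia (a b c : Ob C) : asci a b c ∘ asc a b c = idm _. Proof. exact (asci_asc HC a b c). Qed.
Lemma ascin {a a' b b' c c' : Ob C} (f : Hom a a') (g : Hom b b') (h : Hom c c') :
  asci a' b' c' ∘ (f ⊗ (g ⊗ h)) = ((f ⊗ g) ⊗ h) ∘ asci a b c.
Proof.
  rewrite <- (cidr (asci a' b' c' ∘ _)), <- (aai a b c). nrm.
  lrw (eq_sym (ascn f g h)). lrw (aia a' b' c'). rewrite cidl. reflexivity.
Qed.
Lemma lun {a a' : Ob C} (f : Hom a a') : lu a' ∘ (idm tunit ⊗ f) = f ∘ lu a. Proof. exact (lu_nat HC f). Qed.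
Lemma run {a a' : Ob C} (f : Hom a a') : ru a' ∘ (f ⊗ idm tunit) = f ∘ ru a. Proof. exact (ru_nat HC f). Qed.
Lemma lulu (a : Ob C) : lu a ∘ lui a = idm _. Proof. exact (lu_lui HC a). Qed.
Lemma luil (a : Ob C) : lui a ∘ lu a = idm _. Proof. exact (lui_lu HC a). Qed.
Lemma ruru (a : Ob C) : ru a ∘ rui a = idm _. Proof. exact (ru_rui HC a). Qed.
Lemma ruir (a : Ob C) : rui a ∘ ru a = idm _. Proof. exact (rui_ru HC a). Qed.
Lemma luin {a a' : Ob C} (f : Hom a a') : lui a' ∘ f = (idm tunit ⊗ f) ∘ lui a.
Proof.
  rewrite <- (cidl ((idm tunit ⊗ f) ∘ lui a)), <- (luil a'). nrm.
  lrw (lun f). lrw (lulu a). rewrite cidr. reflexivity.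
Qed.
Lemma ruin {a a' : Ob C} (f : Hom a a') : rui a' ∘ f = (f ⊗ idm tunit) ∘ rui a.
Proof.
  rewrite <- (cidl ((f ⊗ idm tunit) ∘ rui a)), <- (ruir a'). nrm.
  lrw (run f). lrw (ruru a). rewrite cidr. reflexivity.
Qed.
Lemma pent (a b c d : Ob C) : asc a b (c ⊠ d) ∘ asc (a ⊠ b) c d
      = (idm a ⊗ asc b c d) ∘ asc a (b ⊠ c) d ∘ (asc a b c ⊗ idm d).
Proof. exact (pentagon HC a b c d). Qed.
Lemma tri (a b : Ob C) : (idm a ⊗ lu b) ∘ asc a tunit b = (ru a ⊗ idm b).
Proof. exact (triangle HC a b). Qed.
Lemma brn {a a' b b' : Ob C} (f : Hom a a') (g : Hom b b') : br a' b' ∘ (f ⊗ g) = (g ⊗ f) ∘ br a b.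
Proof. exact (br_nat HC f g). Qed.
Lemma bbi (a b : Ob C) : br a b ∘ bri a b = idm _. Proof. exact (br_bri HC a b). Qed.
Lemma bib (a b : Ob C) : bri a b ∘ br a b = idm _. Proof. exact (bri_br HC a b). Qed.
Lemma hex1 (a b c : Ob C) : asc b c a ∘ br a (b ⊠ c) ∘ asc a b c
      = (idm b ⊗ br a c) ∘ asc b a c ∘ (br a b ⊗ idm c).
Proof. exact (hexagon1 HC a b c). Qed.
Lemma hex2 (a b c : Ob C) : asci c a b ∘ br (a ⊠ b) c ∘ asci a b c
      = (br a c ⊗ idm b) ∘ asci a c b ∘ (idm a ⊗ br b c).
Proof. exact (hexagon2 HC a b c). Qed.

Lemma tsplit {a b c d : Ob C} (f : Hom a b) (g : Hom c d) : (f ⊗ g) = (f ⊗ idm d) ∘ (idm a ⊗ g).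
Proof. rewrite <- tc, cidl, cidr. reflexivity. Qed.
Lemma tsplit' {a b c d : Ob C} (f : Hom a b) (g : Hom c d) : (f ⊗ g) = (idm b ⊗ g) ∘ (f ⊗ idm c).
Proof. rewrite <- tc, cidl, cidr. reflexivity. Qed.
Lemma tcl {a1 a2 a3 b : Ob C} (f1 : Hom a1 a2) (f2 : Hom a2 a3) :
  ((f2 ∘ f1) ⊗ idm b) = (f2 ⊗ idm b) ∘ (f1 ⊗ idm b).
Proof. rewrite <- tc, cidl. reflexivity. Qed.
Lemma tcr {a b1 b2 b3 : Ob C} (f1 : Hom b1 b2) (f2 : Hom b2 b3) :
  (idm a ⊗ (f2 ∘ f1)) = (idm a ⊗ f2) ∘ (idm a ⊗ f1).
Proof. rewrite <- tc, cidl. reflexivity. Qed.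
Lemma swap_t {a b c d : Ob C} (f : Hom a b) (g : Hom c d) :
  (f ⊗ idm d) ∘ (idm a ⊗ g) = (idm b ⊗ g) ∘ (f ⊗ idm c).
Proof. rewrite <- !tc, !cidl, !cidr. reflexivity. Qed.

Lemma I_faith {a b : Ob C} (f g : Hom a b) : (idm tunit ⊗ f) = (idm tunit ⊗ g) -> f = g.
Proof.
  intros E. rewrite <- (cidr f), <- (cidr g), <- (lulu a). nrm.
  rewrite <- !lun, E. reflexivity.
Qed.
Lemma I_faith_r {a b : Ob C} (f g : Hom a b) : (f ⊗ idm tunit) = (g ⊗ idm tunit) -> f = g.
Proof.
  intros E. rewrite <- (cidr f), <- (cidr g), <- (ruru a). nrm.
  rewrite <- !run, E. reflexivity.
Qed.
Lemma iso_cancel_r {a b c : Ob C} (f g : Hom b c) (i : Hom a b) (j : Hom b a) :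
  i ∘ j = idm _ -> f ∘ i = g ∘ i -> f = g.
Proof. intros E1 E2. rewrite <- (cidr f), <- (cidr g), <- E1. nrm. rewrite E2. reflexivity. Qed.

Lemma kelly1 (x t : Ob C) : lu (x ⊠ t) ∘ asc tunit x t = (lu x ⊗ idm t).
Proof.
  apply I_faith.
  apply (iso_cancel_r (i := asc tunit (tunit ⊠ x) t ∘ (asc tunit tunit x ⊗ idm t))
                      (j := (asci tunit tunit x ⊗ idm t) ∘ asci tunit (tunit ⊠ x) t)).
  { nrm. lrw (eq_sym (tcl (asci tunit tunit x) (asc tunit tunit x))). rewrite aai, tid, cidr, aai. reflexivity. }
  rewrite tcr. nrm. lrw (eq_sym (pent tunit tunit x t)).
  rewrite tri. rewrite <- (tid x t).
  lrw (eq_sym (ascn (ru tunit) (idm x) (idm t))).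
  lrw (eq_sym (ascn (idm tunit) (lu x) (idm t))).
  lrw (eq_sym (tcl (asc tunit tunit x) (idm tunit ⊗ lu x))). rewrite tri. reflexivity.
Qed.

Inductive T : Type := At (o : Ob C) | Un | Tn (x y : T).
Fixpoint den (x : T) : Ob C :=
  match x with At o => o | Un => tunit | Tn x y => den x ⊠ den y end.
Fixpoint F (x : T) (t : Ob C) : Ob C :=
  match x with At o => o ⊠ t | Un => t | Tn x y => F x (F y t) end.
Definition wh (o : Ob C) {s t : Ob C} (h : Hom s t) : Hom (o ⊠ s) (o ⊠ t) := idm o ⊗ h.
Arguments wh : simpl never.
Fixpoint Fmap (x : T) {s t : Ob C} (h : Hom s t) : Hom (F x s) (F x t) :=
  match x return Hom (F x s) (F x t) with
  | At o => wh o h | Un => h | Tn x y => Fmap x (Fmap y h) end.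
Fixpoint phi (x : T) (t : Ob C) : Hom (den x ⊠ t) (F x t) :=
  match x return Hom (den x ⊠ t) (F x t) with
  | At o => idm _ | Un => lu t
  | Tn x y => phi x (F y t) ∘ (idm (den x) ⊗ phi y t) ∘ asc (den x) (den y) t end.
Fixpoint psi (x : T) (t : Ob C) : Hom (F x t) (den x ⊠ t) :=
  match x return Hom (F x t) (den x ⊠ t) with
  | At o => idm _ | Un => lui t
  | Tn x y => asci (den x) (den y) t ∘ (idm (den x) ⊗ psi y t) ∘ psi x (F y t) end.

Inductive S : T -> T -> Type :=
| Sid (x : T) : S x x
| Scomp {x y z : T} (g : S y z) (f : S x y) : S x z
| Sten {x y x' y' : T} (f : S x y) (g : S x' y') : S (Tn x x') (Tn y y')
| Sasc (x y z : T) : S (Tn (Tn x y) z) (Tn x (Tn y z))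
| Sasci (x y z : T) : S (Tn x (Tn y z)) (Tn (Tn x y) z)
| Slu (x : T) : S (Tn Un x) x
| Slui (x : T) : S x (Tn Un x)
| Sru (x : T) : S (Tn x Un) x
| Srui (x : T) : S x (Tn x Un)
| Sgen {x y : T} (f : Hom (den x) (den y)) : S x y.

Fixpoint sem {x y : T} (s : S x y) : Hom (den x) (den y) :=
  match s in S x y return Hom (den x) (den y) with
  | Sid x => idm (den x)
  | Scomp g f => sem g ∘ sem f
  | Sten f g => sem f ⊗ sem g
  | Sasc x y z => asc (den x) (den y) (den z)
  | Sasci x y z => asci (den x) (den y) (den z)
  | Slu x => lu (den x) | Slui x => lui (den x) | Sru x => ru (den x) | Srui x => rui (den x)
  | Sgen f => f end.

Definition G {x y : T} (f : Hom (den x) (den y)) (t : Ob C) : Hom (F x t) (F y t) :=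
  phi y t ∘ (f ⊗ idm t) ∘ psi x t.
Arguments G : simpl never.

Fixpoint semT {x y : T} (s : S x y) (t : Ob C) : Hom (F x t) (F y t) :=
  match s in S x y return Hom (F x t) (F y t) with
  | Sid x => idm _
  | Scomp g f => semT g t ∘ semT f t
  | @Sten x y x' y' f g => semT f (F y' t) ∘ Fmap x (semT g t)
  | Sasc x y z => idm _
  | Sasci x y z => idm _
  | Slu x => idm _ | Slui x => idm _ | Sru x => idm _ | Srui x => idm _
  | Sgen f => G f t end.

Lemma wh_id (o s : Ob C) : wh o (idm s) = idm _. Proof. unfold wh. apply tid. Qed.
Lemma wh_comp (o : Ob C) {a b c : Ob C} (g : Hom b c) (f : Hom a b) : wh o (g ∘ f) = wh o g ∘ wh o f.
Proof. unfold wh. apply tcr. Qed.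
Lemma Fmap_id (x : T) (s : Ob C) : Fmap x (idm s) = idm _.
Proof. revert s; induction x; intros s; simpl; [apply wh_id| reflexivity|]. rewrite IHx2, IHx1. reflexivity. Qed.
Lemma Fmap_comp (x : T) {a b c : Ob C} (g : Hom b c) (f : Hom a b) : Fmap x (g ∘ f) = Fmap x g ∘ Fmap x f.
Proof. revert a b c g f; induction x; intros; simpl; [apply wh_comp | reflexivity |]. rewrite IHx2, IHx1. reflexivity. Qed.

Lemma phi_psi (x : T) (t : Ob C) : phi x t ∘ psi x t = idm _.
Proof.
  revert t; induction x; intros t; simpl.
  - apply cidl.
  - apply lulu.
  - nrm. lrw (aai (den x1) (den x2) t). rewrite cidr. lrw (eq_sym (tcr (psi x2 t) (phi x2 t))).
    rewrite IHx2, tid, cidr. apply IHx1.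
Qed.
Lemma psi_phi (x : T) (t : Ob C) : psi x t ∘ phi x t = idm _.
Proof.
  revert t; induction x; intros t; simpl.
  - apply cidl.
  - apply luil.
  - nrm. lrw (IHx1 (F x2 t)). rewrite cidr. lrw (eq_sym (tcr (phi x2 t) (psi x2 t))).
    rewrite IHx2, tid, cidr. apply aia.
Qed.

Lemma phi_nat (x : T) {s t : Ob C} (h : Hom s t) : phi x t ∘ (idm (den x) ⊗ h) = Fmap x h ∘ phi x s.
Proof.
  revert s t h; induction x; intros s t h; simpl.
  - rewrite cidl, cidr. reflexivity.
  - apply lun.
  - rewrite <- (tid (den x1) (den x2)). lrw (ascn (idm (den x1)) (idm (den x2)) h).
    lrw (eq_sym (tcr (idm (den x2) ⊗ h) (phi x2 t))). rewrite IHx2. rewrite tcr. nrm.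
    lrw (IHx1 _ _ (Fmap x2 h)). reflexivity.
Qed.
Lemma psi_nat (x : T) {s t : Ob C} (h : Hom s t) : psi x t ∘ Fmap x h = (idm (den x) ⊗ h) ∘ psi x s.
Proof.
  apply (iso_cancel_r (i := phi x s) (j := psi x s)). apply phi_psi.
  nrm. lrw (eq_sym (phi_nat x h)). lrw (psi_phi x t). rewrite cidl. lrw (psi_phi x s). rewrite cidr. reflexivity.
Qed.

Lemma key (x y : T) (s : S x y) (t : Ob C) : phi y t ∘ (sem s ⊗ idm t) = semT s t ∘ phi x t.
Proof.
  revert t; induction s; intros t; cbn.
  - rewrite tid, cidl, cidr. reflexivity.
  - rewrite tcl. nrm. rewrite IHs1. rewrite <- cA, IHs2. nrm. reflexivity.
  -
    lrw (ascn (sem s1) (sem s2) (idm t)).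
    rewrite (tsplit (sem s1) (sem s2 ⊗ idm t)). nrm.
    lrw (eq_sym (swap_t (sem s1) (phi y' t))). lrw (IHs1 (F y' t)).
    lrw (eq_sym (tcr (sem s2 ⊗ idm t) (phi y' t))). rewrite IHs2.
    rewrite tcr. nrm. lrw (phi_nat x (semT s2 t)). reflexivity.
  -
    rewrite tcr, tcr. nrm.
    lrw (eq_sym (pent (den x) (den y) (den z) t)).
    lrw (eq_sym (ascn (idm (den x)) (idm (den y)) (phi z t))). rewrite tid, cidl. reflexivity.
  -
    rewrite cidl.
    assert (E : phi (Tn x (Tn y z)) t ∘ (asc (den x) (den y) (den z) ⊗ idm t) = phi (Tn (Tn x y) z) t).
    { cbn. rewrite tcr, tcr. nrm.
      lrw (eq_sym (pent (den x) (den y) (den z) t)).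
      lrw (eq_sym (ascn (idm (den x)) (idm (den y)) (phi z t))). rewrite tid. reflexivity. }
    cbn in E. rewrite <- E. nrm. lrw (eq_sym (tcl (asci (den x) (den y) (den z)) (asc (den x) (den y) (den z)))).
    rewrite aai, tid, cidr. reflexivity.
  -
    rewrite cidl. lrw (lun (phi x t)). lrw (kelly1 (den x) t). reflexivity.
  -
    rewrite cidl. nrm. lrw (lun (phi x t)). lrw (kelly1 (den x) t).
    lrw (eq_sym (tcl (lui (den x)) (lu (den x)))). rewrite lulu, tid, cidr. reflexivity.
  -
    rewrite cidl. lrw (tri (den x) t). reflexivity.
  -
    rewrite cidl. nrm. lrw (tri (den x) t).
    lrw (eq_sym (tcl (rui (den x)) (ru (den x)))). rewrite ruru, tid, cidr. reflexivity.
  -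
    unfold G. nrm. lrw (psi_phi x t). rewrite cidr. reflexivity.
Qed.

Lemma sem_eq {x y : T} (s : S x y) (t : Ob C) : (sem s ⊗ idm t) = psi y t ∘ semT s t ∘ phi x t.
Proof. rewrite <- cA, <- key. nrm. rewrite psi_phi, cidl. reflexivity. Qed.
Lemma semT_eq {x y : T} (s : S x y) (t : Ob C) : semT s t = phi y t ∘ (sem s ⊗ idm t) ∘ psi x t.
Proof. rewrite key. rewrite <- cA, phi_psi, cidr. reflexivity. Qed.
Lemma strictify {x y : T} (s1 s2 : S x y) : semT s1 tunit = semT s2 tunit -> sem s1 = sem s2.
Proof. intros E. apply I_faith_r. rewrite !sem_eq, E. reflexivity. Qed.
Lemma unstrict {x y : T} (s1 s2 : S x y) (t : Ob C) : sem s1 = sem s2 -> semT s1 t = semT s2 t.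
Proof. intros E. rewrite !semT_eq, E. reflexivity. Qed.

Lemma G_nat {x y : T} (f : Hom (den x) (den y)) {s t : Ob C} (h : Hom s t) :
  G f t ∘ Fmap x h = Fmap y h ∘ G f s.
Proof.
  unfold G. nrm. lrw (psi_nat x h). lrw (swap_t f h). lrw (phi_nat y h). reflexivity.
Qed.
Lemma G_comp {x y z : T} (g : Hom (den y) (den z)) (f : Hom (den x) (den y)) (t : Ob C) :
  G g t ∘ G f t = G (x:=x) (y:=z) (g ∘ f) t.
Proof. unfold G. nrm. lrw (psi_phi y t). rewrite cidr. lrw (eq_sym (tcl f g)). reflexivity. Qed.



Lemma whE (a : Ob C) {s t : Ob C} {f g : Hom s t} : f = g -> wh a f = wh a g.
Proof. intros E; rewrite E; reflexivity. Qed.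
Lemma wh_lift (a : Ob C) {p q r q' : Ob C} (A0 : Hom q r) (B0 : Hom p q) (B0' : Hom q' r) (A0' : Hom p q') :
  A0 ∘ B0 = B0' ∘ A0' -> wh a A0 ∘ wh a B0 = wh a B0' ∘ wh a A0'.
Proof. intros E. rewrite <- !wh_comp, E. reflexivity. Qed.

Lemma br_ten_r (a b c : Ob C) : br a (b ⊠ c) =
  asci b c a ∘ (idm b ⊗ br a c) ∘ asc b a c ∘ (br a b ⊗ idm c) ∘ asci a b c.
Proof.
  lrw (eq_sym (hex1 a b c)). lrw (aia b c a). rewrite cidl. rewrite <- cA, aai, cidr. reflexivity.
Qed.
Lemma br_ten_l (a b c : Ob C) : br (a ⊠ b) c =
  asc c a b ∘ (br a c ⊗ idm b) ∘ asci a c b ∘ (idm a ⊗ br b c) ∘ asc a b c.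
Proof.
  lrw (eq_sym (hex2 a b c)). lrw (aai c a b). rewrite cidl. rewrite <- cA, aia, cidr. reflexivity.
Qed.
Lemma bri_iso (a b : Ob C) {x : Ob C} (f g : Hom x (a ⊠ b)) : br a b ∘ f = br a b ∘ g -> f = g.
Proof. intros E. rewrite <- (cidl f), <- (cidl g), <- (bib a b). rewrite <- !cA, E. reflexivity. Qed.

End Main.
Global Opaque G.
Arguments At {C} o. Arguments Un {C}. Arguments Tn {C} x y.
Arguments Sid {C} x. Arguments Scomp {C x y z} g f. Arguments Sten {C x y x' y'} f g.
Arguments Sasc {C} x y z. Arguments Sasci {C} x y z. Arguments Slu {C} x. Arguments Slui {C} x.
Arguments Sru {C} x. Arguments Srui {C} x. Arguments Sgen {C x y} f.

Ltac nrm := repeat rewrite cA.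
Tactic Notation "lrw" open_constr(L) :=
  let H := fresh "LRW" in epose proof L as H; cbn [F den Fmap] in H;
  first [ rewrite (ctx8 _ H) | rewrite (ctx7 _ H) | rewrite (ctx6 _ H) | rewrite (ctx5 _ H)
        | rewrite (ctx4 _ H) | rewrite (ctx3 _ H) | rewrite (ctx2 _ H) | rewrite H ]; clear H; nrm;
  repeat (rewrite ?wh_comp; nrm).

Ltac reify_ob o :=
  lazymatch o with
  | @ten _ ?a ?b => let x := reify_ob a in let y := reify_ob b in constr:(Tn x y)
  | @tunit ?C => constr:(@Un C)
  | _ => constr:(At o)
  end.
Ltac reify_hom f :=
  lazymatch f with
  | @comp _ _ _ _ ?g ?h => let sg := reify_hom g in let sh := reify_hom h in constr:(Scomp sg sh)
  | @tenm _ _ _ _ _ ?g ?h => let sg := reify_hom g in let sh := reify_hom h in constr:(Sten sg sh)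
  | @idm _ ?a => let x := reify_ob a in constr:(Sid x)
  | @asc _ ?a ?b ?c => let x := reify_ob a in let y := reify_ob b in let z := reify_ob c in constr:(Sasc x y z)
  | @asci _ ?a ?b ?c => let x := reify_ob a in let y := reify_ob b in let z := reify_ob c in constr:(Sasci x y z)
  | @lu _ ?a => let x := reify_ob a in constr:(Slu x)
  | @lui _ ?a => let x := reify_ob a in constr:(Slui x)
  | @ru _ ?a => let x := reify_ob a in constr:(Sru x)
  | @rui _ ?a => let x := reify_ob a in constr:(Srui x)
  | _ => lazymatch type of f with
         | @Hom _ ?a ?b => let x := reify_ob a in let y := reify_ob b in constr:(Sgen (x:=x) (y:=y) f)
         end
  end.
Ltac sclean := cbn [semT Fmap F den];
  repeat (rewrite ?Fmap_id, ?wh_id, ?cidl, ?cidr, ?wh_comp; nrm).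
Ltac strict :=
  lazymatch goal with |- ?l = ?r =>
    let sl := reify_hom l in let sr := reify_hom r in
    change (sem sl = sem sr); apply strictify; sclean end.
Ltac strict_in H t :=
  lazymatch type of H with ?l = ?r =>
    let sl := reify_hom l in let sr := reify_hom r in
    let E := fresh in
    pose proof (unstrict (s1:=sl) (s2:=sr) t H) as E; clear H; rename E into H; cbn [semT Fmap F den] in H;
    repeat (rewrite ?Fmap_id, ?wh_id, ?cidl, ?cidr, ?wh_comp in H; repeat rewrite cA in H) end.



Ltac peel y A := lazymatch y with
 | @At _ ?a => lazymatch A with @wh _ a _ _ ?h => h end
 | @Un _ => A
 | @Tn _ ?y1 ?y2 => let A1 := peel y1 A in peel y2 A1 end.
Ltac comm2 A B :=
  lazymatch A with
  | @wh _ ?a _ _ ?A0 =>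
     lazymatch B with
     | @wh _ a _ _ ?B0 => let E := comm2 A0 B0 in constr:(wh_lift a E)
     | @G _ ?x ?y ?f ?s => let h := peel y A in constr:(eq_sym (G_nat (x:=x) (y:=y) f h))
     end
  | @G _ ?x ?y ?f ?t =>
     lazymatch B with
     | @G _ ?x' ?y' ?f' ?s =>
         match constr:(tt) with
         | _ => let h := peel x B in constr:(G_nat (x:=x) (y:=y) f h)
         | _ => let h := peel y' A in constr:(eq_sym (G_nat (x:=x') (y:=y') f' h))
         end
     | _ => let h := peel x B in constr:(G_nat (x:=x) (y:=y) f h)
     end
  end.
Ltac nth_r n c := lazymatch n with
 | O => lazymatch c with ?r ∘ ?l => l | _ => c end
 | Datatypes.S ?m => lazymatch c with ?r ∘ ?l => nth_r m r end end.
Ltac len c := lazymatch c with ?r ∘ ?l => let n := len r in constr:(Datatypes.S n) | _ => constr:(1) end.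
(* swap factors i and i+1 (1-based, from the left) of the LHS *)
Ltac swl i := lazymatch goal with |- ?l = ?r =>
  let n := len l in let k := eval compute in (n - i - 1) in
  let B := nth_r k l in let k1 := constr:(Datatypes.S k) in let A := nth_r k1 l in let E := comm2 A B in
  let H := fresh in pose proof E as H; cbn [Fmap] in H;
  etransitivity; [ lrw H; reflexivity | ]; clear H end.
Ltac swr i := symmetry; swl i; symmetry.
Tactic Notation "lrw1" constr(a) open_constr(L) :=
  let H := fresh in epose proof L as H; eapply (whE a) in H; rewrite ?wh_comp in H; lrw H; clear H.
Tactic Notation "lrw2" constr(a) constr(b) open_constr(L) :=
  let H := fresh in epose proof L as H; eapply (whE b) in H; rewrite ?wh_comp in H;
  eapply (whE a) in H; rewrite ?wh_comp in H; lrw H; clear H.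
Tactic Notation "lrw3" constr(a) constr(b) constr(c) open_constr(L) :=
  let H := fresh in epose proof L as H; eapply (whE c) in H; rewrite ?wh_comp in H;
  eapply (whE b) in H; rewrite ?wh_comp in H;
  eapply (whE a) in H; rewrite ?wh_comp in H; lrw H; clear H.
Tactic Notation "lrw4" constr(a) constr(b) constr(c) constr(d) open_constr(L) :=
  let H := fresh in epose proof L as H; eapply (whE d) in H; rewrite ?wh_comp in H;
  eapply (whE c) in H; rewrite ?wh_comp in H;
  eapply (whE b) in H; rewrite ?wh_comp in H;
  eapply (whE a) in H; rewrite ?wh_comp in H; lrw H; clear H.
Ltac strict_all H :=
  lazymatch type of H with ?l = ?r =>
    let sl := reify_hom l in let sr := reify_hom r in
    let E := fresh in
    pose proof (fun t => unstrict (s1:=sl) (s2:=sr) t H) as E; clear H; rename E into H; cbn [semT Fmap F den] in H;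
    repeat (first [ setoid_rewrite Fmap_id in H | setoid_rewrite wh_id in H | setoid_rewrite cidl in H
                  | setoid_rewrite cidr in H | setoid_rewrite wh_comp in H | setoid_rewrite cA in H ]) end.
Ltac cl := repeat (rewrite ?Fmap_id, ?wh_id, ?cidl, ?cidr, ?wh_comp; nrm).
Tactic Notation "lrw5" constr(a) constr(b) constr(c) constr(d) constr(e) open_constr(L) :=
  let H := fresh in epose proof L as H; eapply (whE e) in H; rewrite ?wh_comp in H;
  eapply (whE d) in H; rewrite ?wh_comp in H; eapply (whE c) in H; rewrite ?wh_comp in H;
  eapply (whE b) in H; rewrite ?wh_comp in H; eapply (whE a) in H; rewrite ?wh_comp in H; lrw H; clear H.
Tactic Notation "lrw6" constr(a) constr(b) constr(c) constr(d) constr(e) constr(f) open_constr(L) :=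
  let H := fresh in epose proof L as H; eapply (whE f) in H; rewrite ?wh_comp in H; eapply (whE e) in H; rewrite ?wh_comp in H;
  eapply (whE d) in H; rewrite ?wh_comp in H; eapply (whE c) in H; rewrite ?wh_comp in H;
  eapply (whE b) in H; rewrite ?wh_comp in H; eapply (whE a) in H; rewrite ?wh_comp in H; lrw H; clear H.
Ltac onl tac := etransitivity; [ tac; reflexivity | ].
Ltac onr tac := symmetry; onl tac; symmetry.

Section Tests.
Context {C : BMC} {HC : is_braided_monoidal C}.
Lemma kelly2 (a b : Ob C) : (idm a ⊗ ru b) ∘ asc a b tunit = ru (a ⊠ b).
Proof. strict. reflexivity. Qed.
Lemma lu_ru_I : lu (tunit : Ob C) = ru tunit.
Proof. strict. reflexivity. Qed.
Lemma test1 (a b c d : Ob C) : asc a b (c ⊠ d) ∘ asc (a ⊠ b) c d ∘ (asci a b c ⊗ idm d)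
      = (idm a ⊗ asc b c d) ∘ asc a (b ⊠ c) d.
Proof. strict. reflexivity. Qed.

End Tests.
Notation G11 := (@G _ (At _) (At _)).
Notation G21 := (@G _ (Tn (At _) (At _)) (At _)).
Notation G12 := (@G _ (At _) (Tn (At _) (At _))).
Notation G01 := (@G _ Un (At _)).
Notation G10 := (@G _ (At _) Un).
Notation G22 := (@G _ (Tn (At _) (At _)) (Tn (At _) (At _))).

Section L2.
Context {C : BMC} {HC : is_braided_monoidal C}.

Lemma st1 (a : Ob C) : ru (tunit ⊠ a) ∘ asci tunit a tunit = (idm tunit ⊗ ru a).
Proof. strict. reflexivity. Qed.
Lemma st2 (a : Ob C) : ru (a ⊠ tunit) ∘ asci a tunit tunit = (idm a ⊗ ru tunit).
Proof. strict. reflexivity. Qed.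
Lemma st3 (a : Ob C) : (ru tunit ⊗ idm a) ∘ asci tunit tunit a = (idm tunit ⊗ lu a).
Proof. strict. reflexivity. Qed.

Lemma bu2 (a : Ob C) : lu a ∘ br a tunit = ru a.
Proof.
  apply I_faith_r. apply (bri_iso (a:=a) (b:=tunit)).
  transitivity (lu (tunit ⊠ a) ∘ ((idm tunit ⊗ br a tunit) ∘ asc tunit a tunit ∘ (br a tunit ⊗ idm tunit))).
  - nrm. lrw (lun (br a tunit)). lrw (kelly1 a tunit). lrw (eq_sym (tcl (br a tunit) (lu a))). reflexivity.
  - rewrite <- hex1. nrm. lrw (kelly1 tunit a). lrw (eq_sym (brn (idm a) (lu tunit))). lrw (tri a tunit). reflexivity.
Qed.
Lemma bu1 (a : Ob C) : ru a ∘ br tunit a = lu a.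
Proof.
  apply I_faith. apply (bri_iso (a:=tunit) (b:=a)).
  transitivity (ru (a ⊠ tunit) ∘ ((br tunit a ⊗ idm tunit) ∘ asci tunit a tunit ∘ (idm tunit ⊗ br tunit a))).
  - nrm. lrw (run (br tunit a)). lrw (st1 a). lrw (eq_sym (tcr (br tunit a) (ru a))). reflexivity.
  - rewrite <- hex2. nrm. lrw (st2 a). lrw (eq_sym (brn (ru tunit) (idm a))). lrw (st3 a). reflexivity.
Qed.
Lemma brI (a : Ob C) : br tunit a = rui a ∘ lu a.
Proof. rewrite <- (bu1 a). nrm. rewrite ruir, cidl. reflexivity. Qed.
Lemma brI' (a : Ob C) : br a tunit = lui a ∘ ru a.
Proof. rewrite <- (bu2 a). nrm. rewrite luil, cidl. reflexivity. Qed.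

Lemma SBul (N M : Ob C) (u : Hom tunit N) (s : Ob C) :
  G22 (br N M) s ∘ G01 u (M ⊠ s) = wh M (G01 u s).
Proof.
  assert (E : br N M ∘ (u ⊗ idm M) = (idm M ⊗ u) ∘ rui M ∘ lu M).
  { rewrite brn, brI. nrm. reflexivity. }
  strict_in E s. exact E.
Qed.
Lemma SBur (N M : Ob C) (v : Hom tunit M) (s : Ob C) :
  G22 (br N M) s ∘ wh N (G01 v s) = G01 v (N ⊠ s).
Proof.
  assert (E : br N M ∘ (idm N ⊗ v) = (v ⊗ idm N) ∘ lui N ∘ ru N).
  { rewrite brn, brI'. nrm. reflexivity. }
  strict_in E s. exact E.
Qed.
Lemma SBmr (N M : Ob C) (f : Hom (M ⊠ M) M) (s : Ob C) :
  G22 (br N M) s ∘ wh N (G21 f s) = G21 f (N ⊠ s) ∘ wh M (G22 (br N M) s) ∘ G22 (br N M) (M ⊠ s).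
Proof.
  assert (E : br N M ∘ (idm N ⊗ f) = (f ⊗ idm N) ∘ (asci M M N ∘ (idm M ⊗ br N M) ∘ asc M N M ∘ (br N M ⊗ idm M) ∘ asci N M M)).
  { rewrite brn, br_ten_r. reflexivity. }
  strict_in E s. exact E.
Qed.
Lemma SBml (N M : Ob C) (g : Hom (N ⊠ N) N) (s : Ob C) :
  G22 (br N M) s ∘ G21 g (M ⊠ s) = wh M (G21 g s) ∘ G22 (br N M) (N ⊠ s) ∘ wh N (G22 (br N M) s).
Proof.
  assert (E : br N M ∘ (g ⊗ idm M) = (idm M ⊗ g) ∘ (asc M N N ∘ (br N M ⊗ idm N) ∘ asci N M N ∘ (idm N ⊗ br N M) ∘ asc N N M)).
  { rewrite brn, br_ten_l. reflexivity. }
  strict_in E s. exact E.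
Qed.
Lemma SB1r (N M M' : Ob C) (h : Hom M M') (s : Ob C) :
  G22 (br N M') s ∘ wh N (G11 h s) = G11 h (N ⊠ s) ∘ G22 (br N M) s.
Proof.
  assert (E : br N M' ∘ (idm N ⊗ h) = (h ⊗ idm N) ∘ br N M). { rewrite brn. reflexivity. }
  strict_in E s. exact E.
Qed.
Lemma SB1l (N N' M : Ob C) (h : Hom N N') (s : Ob C) :
  G22 (br N' M) s ∘ G11 h (M ⊠ s) = wh M (G11 h s) ∘ G22 (br N M) s.
Proof.
  assert (E : br N' M ∘ (h ⊗ idm M) = (idm M ⊗ h) ∘ br N M). { rewrite brn. reflexivity. }
  strict_in E s. exact E.
Qed.

Lemma SBcl (N M : Ob C) (e : Hom N tunit) (s : Ob C) :
  wh M (G10 e s) ∘ G22 (br N M) s = G10 e (M ⊠ s).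
Proof.
  assert (E : (idm M ⊗ e) ∘ br N M = rui M ∘ lu M ∘ (e ⊗ idm M)).
  { rewrite <- brI, brn. reflexivity. }
  strict_in E s. exact E.
Qed.
Lemma SBcr (N M : Ob C) (e : Hom M tunit) (s : Ob C) :
  G10 e (N ⊠ s) ∘ G22 (br N M) s = wh N (G10 e s).
Proof.
  assert (E : (e ⊗ idm N) ∘ br N M = lui N ∘ ru N ∘ (idm N ⊗ e)).
  { rewrite <- brI', brn. reflexivity. }
  strict_in E s. exact E.
Qed.
Lemma SB12 (N M M1 M2 : Ob C) (f : Hom M (M1 ⊠ M2)) (s : Ob C) :
  G12 f (N ⊠ s) ∘ G22 (br N M) s = wh M1 (G22 (br N M2) s) ∘ G22 (br N M1) (M2 ⊠ s) ∘ wh N (G12 f s).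
Proof.
  assert (E : (f ⊗ idm N) ∘ br N M = (asci M1 M2 N ∘ (idm M1 ⊗ br N M2) ∘ asc M1 N M2 ∘ (br N M1 ⊗ idm M2) ∘ asci N M1 M2) ∘ (idm N ⊗ f)).
  { rewrite <- br_ten_r, brn. reflexivity. }
  strict_in E s. exact E.
Qed.
Lemma SBt (N X Y Z : Ob C) (tau : Hom tunit (X ⊠ (Y ⊠ Z))) (s : Ob C) :
  wh X (wh Y (G22 (br N Z) s)) ∘ wh X (G22 (br N Y) (Z ⊠ s)) ∘ G22 (br N X) (Y ⊠ Z ⊠ s)
  ∘ wh N (@G _ Un (Tn (At X) (Tn (At Y) (At Z))) tau s) = @G _ Un (Tn (At X) (Tn (At Y) (At Z))) tau (N ⊠ s).
Proof.
  assert (E : br N (X ⊠ (Y ⊠ Z)) ∘ (idm N ⊗ tau) = (tau ⊗ idm N) ∘ lui N ∘ ru N).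
  { rewrite brn, brI'. nrm. reflexivity. }
  rewrite br_ten_r, (br_ten_r N Y Z) in E.
  strict_in E s. exact E.
Qed.
End L2.
Section L3.
Context {C : BMC} {HC : is_braided_monoidal C}.

Lemma Smass (M : Ob C) (mM : Hom (M ⊠ M) M) (eM : Hom tunit M) (HM : is_monoid mM eM) (s : Ob C) :
  G21 mM s ∘ G21 mM (M ⊠ s) = G21 mM s ∘ wh M (G21 mM s).
Proof. destruct HM as [E _]. strict_in E s. exact E. Qed.
Lemma Smlu (M : Ob C) (mM : Hom (M ⊠ M) M) (eM : Hom tunit M) (HM : is_monoid mM eM) (s : Ob C) :
  G21 mM s ∘ G01 eM (M ⊠ s) = idm _.
Proof. destruct HM as [_ [E _]]. strict_in E s. exact E. Qed.
Lemma Smru (M : Ob C) (mM : Hom (M ⊠ M) M) (eM : Hom tunit M) (HM : is_monoid mM eM) (s : Ob C) :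
  G21 mM s ∘ wh M (G01 eM s) = idm _.
Proof. destruct HM as [_ [_ E]]. strict_in E s. exact E. Qed.

Section TM.
Variables (M N : Ob C) (mM : Hom (M ⊠ M) M) (eM : Hom tunit M) (mN : Hom (N ⊠ N) N) (eN : Hom tunit N).
Hypotheses (HM : is_monoid mM eM) (HN : is_monoid mN eN).

Lemma tm_assoc : tensor_mult mM mN ∘ (tensor_mult mM mN ⊗ idm (M ⊠ N))
  = tensor_mult mM mN ∘ (idm (M ⊠ N) ⊗ tensor_mult mM mN) ∘ asc _ _ _.
Proof. unfold tensor_mult. strict.
  swl 3. swl 2. lrw (Smass HM _).
  lrw1 M (SBmr N mM _). swr 2.
  lrw2 M M (SBml M mN _). lrw3 M M M (Smass HN _).
  swr 5. swr 4. swr 6. reflexivity.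
Qed.

Lemma tm_lunit : tensor_mult mM mN ∘ (tensor_unit eM eN ⊗ idm (M ⊠ N)) = lu (M ⊠ N).
Proof. unfold tensor_mult, tensor_unit. strict.
  swl 3. swl 2. lrw (Smlu HM _). cl. lrw (SBul M eN _). lrw1 M (Smlu HN _). cl. reflexivity.
Qed.
Lemma tm_runit : tensor_mult mM mN ∘ (idm (M ⊠ N) ⊗ tensor_unit eM eN) = ru (M ⊠ N).
Proof. unfold tensor_mult, tensor_unit. strict.
  lrw1 M (SBur N eM _). swl 2. lrw (Smru HM _). cl. lrw1 M (Smru HN _). cl. reflexivity.
Qed.
Lemma tm_monoid : is_monoid (tensor_mult mM mN) (tensor_unit eM eN).
Proof. split; [apply tm_assoc | split; [apply tm_lunit | apply tm_runit]]. Qed.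

Definition jM := (idm M ⊗ eN) ∘ rui M.
Definition iN := (eM ⊗ idm N) ∘ lui N.
Lemma tm_LJ : tensor_mult mM mN ∘ (jM ⊗ idm (M ⊠ N)) = (mM ⊗ idm N) ∘ asci M M N.
Proof. unfold tensor_mult, jM. strict.
  lrw1 M (SBul M eN _). lrw2 M M (Smlu HN _). cl. reflexivity. Qed.
Lemma tm_JI : tensor_mult mM mN ∘ (jM ⊗ iN) = idm (M ⊠ N).
Proof. unfold tensor_mult, jM, iN. strict.
  lrw1 M (SBul M eN _). lrw2 M M (Smlu HN _). cl. lrw (Smru HM _). reflexivity. Qed.
Lemma tm_IR : tensor_mult mM mN ∘ (idm (M ⊠ N) ⊗ iN) = (idm M ⊗ mN) ∘ asc M N N.
Proof. unfold tensor_mult, iN. strict.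
  lrw1 M (SBur N eM _). swl 2. lrw (Smru HM _). cl. reflexivity. Qed.
Lemma tm_IJ : tensor_mult mM mN ∘ (iN ⊗ jM) = br N M.
Proof. unfold tensor_mult, jM, iN. strict.
  swl 3. swl 2. lrw (Smlu HM _). cl. swl 2. lrw1 M (Smru HN _). cl. reflexivity. Qed.
Lemma tm_II : tensor_mult mM mN ∘ (iN ⊗ iN) = iN ∘ mN.
Proof. unfold tensor_mult, iN. strict.
  swl 3. swl 2. lrw (Smlu HM _). cl. lrw (SBur N eM _). swl 1. reflexivity. Qed.
Lemma tm_JJ : tensor_mult mM mN ∘ (jM ⊗ jM) = jM ∘ mM.
Proof. unfold tensor_mult, jM. strict.
  lrw1 M (SBul M eN _). lrw2 M M (Smlu HN _). cl. swl 1. reflexivity. Qed.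
End TM.
End L3.

Section TM2.
Context {C : BMC} {HC : is_braided_monoidal C}.
Variables (M N M' N' K : Ob C) (mM : Hom (M ⊠ M) M) (eM : Hom tunit M) (mN : Hom (N ⊠ N) N) (eN : Hom tunit N)
  (mM' : Hom (M' ⊠ M') M') (eM' : Hom tunit M') (mN' : Hom (N' ⊠ N') N') (eN' : Hom tunit N')
  (mK : Hom (K ⊠ K) K) (eK : Hom tunit K).

Lemma tm_fg (f : Hom M M') (g : Hom N N') :
  is_monoid_morphism mM eM mM' eM' f -> is_monoid_morphism mN eN mN' eN' g ->
  is_monoid_morphism (tensor_mult mM mN) (tensor_unit eM eN) (tensor_mult mM' mN') (tensor_unit eM' eN') (f ⊗ g).
Proof.
  intros [Hf1 Hf2] [Hg1 Hg2]. unfold tensor_mult, tensor_unit. split.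
  - strict_all Hf1. strict_all Hg1. strict.
    swl 1. lrw (Hf1 _). swl 1. swl 2. swl 3. lrw2 M M (Hg1 _).
    swl 6. lrw1 M (eq_sym (SB1l M g _)). swl 3.
    lrw1 M (eq_sym (SB1r N' f _)). swl 2. swl 3. swl 5. reflexivity.
  - strict_all Hf2. strict_all Hg2. strict. swl 1. lrw (Hf2 _). swl 1. lrw (Hg2 _). reflexivity.
Qed.
Lemma tm_asc :
  is_monoid_morphism (tensor_mult (tensor_mult mM mN) mK) (tensor_unit (tensor_unit eM eN) eK)
    (tensor_mult mM (tensor_mult mN mK)) (tensor_unit eM (tensor_unit eN eK)) (asc M N K).
Proof.
  unfold tensor_mult, tensor_unit. rewrite br_ten_r, br_ten_l. split.
  - strict. swl 3. swl 4. reflexivity.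
  - strict. reflexivity.
Qed.
Lemma tm_counit_r (e : Hom N tunit) : is_monoid mM eM ->
  e ∘ mN = unit_mult C ∘ (e ⊗ e) -> e ∘ eN = idm tunit ->
  is_monoid_morphism (tensor_mult mM mN) (tensor_unit eM eN) mM eM (ru M ∘ (idm M ⊗ e)).
Proof.
  intros HM H1 H2. unfold tensor_mult, tensor_unit, unit_mult in *. strict_all H1. strict_all H2. split.
  - strict. swl 1. lrw2 M M (H1 tunit). swl 3. lrw1 M (SBcl M e _). reflexivity.
  - strict. swl 1. lrw (H2 _). cl. reflexivity.
Qed.
Lemma tm_counit_l (e : Hom M tunit) : is_monoid mN eN ->
  e ∘ mM = unit_mult C ∘ (e ⊗ e) -> e ∘ eM = idm tunit ->
  is_monoid_morphism (tensor_mult mM mN) (tensor_unit eM eN) mN eN (lu N ∘ (e ⊗ idm N)).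
Proof.
  intros HN H1 H2. unfold tensor_mult, tensor_unit, unit_mult in *. strict_all H1. strict_all H2. split.
  - strict. lrw (H1 _). swl 2. swl 1. lrw1 M (SBcr N e _). reflexivity.
  - strict. lrw (H2 _). cl. reflexivity.
Qed.
End TM2.

Ltac rl H := unfold jM, iN, tensor_unit, unit_mult in H; strict_all H.

Section P.
Context {C : BMC} {HC : is_braided_monoidal C}.
Variables (A B : Ob C) (mA : Hom (A ⊠ A) A) (eA : Hom tunit A)
          (mB : Hom (B ⊠ B) B) (eB : Hom tunit B)
          (del : Hom B (B ⊠ B)) (eps : Hom B tunit)
          (gamma : Hom A (A ⊠ B)) (tau : Hom tunit (A ⊠ B ⊠ B)).
Hypothesis HA : is_monoid mA eA.
Hypothesis HB : is_bimonoid mB eB del eps.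
Hypothesis HT : is_twisted_coaction mA eA mB eB del eps gamma tau.

Lemma id_morph {M : Ob C} (m : Hom (M ⊠ M) M) (e : Hom tunit M) : is_monoid_morphism m e m e (idm M).
Proof. split; [rewrite cidl, tid, cidr | rewrite cidl]; reflexivity. Qed.
Lemma morph_comp {M N K : Ob C} (mM : Hom (M ⊠ M) M) (eM : Hom tunit M) (mN : Hom (N ⊠ N) N) (eN : Hom tunit N)
  (mK : Hom (K ⊠ K) K) (eK : Hom tunit K) (f : Hom M N) (g : Hom N K) :
  is_monoid_morphism mM eM mN eN f -> is_monoid_morphism mN eN mK eK g -> is_monoid_morphism mM eM mK eK (g ∘ f).
Proof.
  intros [F1 F2] [G1 G2]. split.
  - rewrite <- cA, F1. nrm. rewrite G1. rewrite tc. nrm. reflexivity.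
  - rewrite <- cA, F2. exact G2.
Qed.
Lemma HBm : is_monoid mB eB. Proof. apply HB. Qed.
Lemma HB2 : is_monoid (tensor_mult mB mB) (tensor_unit eB eB). Proof. apply tm_monoid; apply HBm. Qed.
Lemma HP1 : is_monoid (tensor_mult mA mB) (tensor_unit eA eB). Proof. apply tm_monoid; [apply HA | apply HBm]. Qed.
Lemma HP2 : is_monoid (tensor_mult mA (tensor_mult mB mB)) (tensor_unit eA (tensor_unit eB eB)).
Proof. apply tm_monoid; [apply HA | apply HB2]. Qed.
Lemma HB3 : is_monoid (tensor_mult mB (tensor_mult mB mB)) (tensor_unit eB (tensor_unit eB eB)).
Proof. apply tm_monoid; [apply HBm | apply HB2]. Qed.
Lemma HP3 : is_monoid (tensor_mult mA (tensor_mult mB (tensor_mult mB mB))) (tensor_unit eA (tensor_unit eB (tensor_unit eB eB))).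
Proof. apply tm_monoid; [apply HA | apply HB3]. Qed.

Lemma eq1 : let z := z_of mA eA mB gamma in
  z ∘ (idm B ⊗ mA) = (mA ⊗ idm B) ∘ asci A A B ∘ (idm A ⊗ z) ∘ asc A B A ∘ (z ⊗ idm A) ∘ asci B A A.
Proof. intros z. unfold z, z_of, dot, mAB. strict.
  destruct HT as [[Hg1 _] _]. unfold mAB in Hg1. rl Hg1.
  pose proof (tm_LJ mA (HBm)) as LJ. rl LJ.
  pose proof (tm_JI HA HBm) as JI. rl JI.
  pose proof (tm_assoc HA HBm) as AS. rl AS.
  lrw1 B (Hg1 _).
  lrw (eq_sym (LJ _)). swr 2. lrw (eq_sym (AS _)). lrw (JI _). cl.
  swr 2. lrw (AS _). swr 3. swr 2. swl 4. reflexivity.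
Qed.
Lemma eq2 : let z := z_of mA eA mB gamma in z ∘ (idm B ⊗ eA) ∘ rui B = (eA ⊗ idm B) ∘ lui B.
Proof. intros z. unfold z, z_of, dot, mAB. strict.
  destruct HT as [[_ Hg2] _]. unfold eAB in Hg2. rl Hg2.
  pose proof (proj2 (proj2 HP1)) as RU. rl RU.
  lrw1 B (Hg2 _). swl 2. swl 3. lrw (RU _). cl. reflexivity.
Qed.
Lemma eq3 : let z := z_of mA eA mB gamma in let w := w_of eA eps in
  mA ∘ (w ⊗ idm A) = mA ∘ (idm A ⊗ w) ∘ z.
Proof. intros z w. unfold z, w, z_of, w_of, dot, mAB. strict.
  destruct HT as [_ [Hcu _]]. rl Hcu.
  destruct HB as [_ [_ [_ [He1 He2]]]].
  pose proof (proj1 (tm_counit_r (M:=A) (mM:=mA) (eM:=eA) (mN:=mB) (eN:=eB) HA He1 He2)) as PI. rl PI.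
  lrw (Smlu HA _). cl. lrw (Smru HA _). cl. lrw (PI _). swr 3. swr 2. lrw (Smlu HA _). cl.
  lrw1 B (Hcu _). cl. reflexivity.
Qed.
Lemma eq6 : let d := d_of mA eA mB del tau in let w := w_of eA eps in
  (mA ⊗ idm B) ∘ asci A A B ∘ (idm A ⊗ (w ⊗ idm B)) ∘ d = (eA ⊗ idm B) ∘ lui B.
Proof. intros d w. unfold d, w, d_of, w_of, dot, mABB, mBB. strict.
  destruct HT as [_ [_ [_ [_ [_ Hn2]]]]]. rl Hn2.
  destruct HB as [HBm' [[_ [Hc1 _]] [_ [He1 He2]]]].
  pose proof (proj1 (tm_fg (id_morph mA eA) (tm_counit_l (mM:=mB) (eM:=eB) HBm' He1 He2))) as PI. rl PI.
  rl Hc1.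
  lrw (Smru HA _). cl. lrw (PI _). swl 3. swl 2. swl 3. lrw (Hc1 _). cl.
  lrw1 B (Hn2 _). swl 2. swl 3. pose proof (proj2 (proj2 HP1)) as RU. rl RU. lrw (RU _). cl. reflexivity.
Qed.
Lemma eq7 : let d := d_of mA eA mB del tau in let w := w_of eA eps in let z := z_of mA eA mB gamma in
  (mA ⊗ idm B) ∘ asci A A B ∘ (idm A ⊗ z) ∘ (idm A ⊗ (idm B ⊗ w)) ∘ d = (eA ⊗ idm B) ∘ lui B.
Proof. intros d w z. pose proof eq2 as E2. cbv zeta in E2. unfold z_of, dot, mAB in E2. rl E2.
  unfold d, w, z, d_of, w_of, z_of, dot, mABB, mBB, mAB. strict.
  destruct HT as [_ [_ [_ [_ [Hn1 _]]]]]. rl Hn1.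
  destruct HB as [HBm' [[_ [_ Hc2]] [_ [He1 He2]]]].
  pose proof (proj1 (tm_fg (id_morph mA eA) (tm_counit_r (mN:=mB) (eN:=eB) HBm' He1 He2))) as PI. rl PI.
  rl Hc2.
  lrw1 A (E2 _). lrw (Smru HA _). cl. lrw (PI _). swl 3. swl 2. swl 3. lrw (Hc2 _). cl.
  lrw1 B (Hn1 _). swl 2. swl 3. pose proof (proj2 (proj2 HP1)) as RU. rl RU. lrw (RU _). cl. reflexivity.
Qed.
Lemma LZ2 : let z := z_of mA eA mB gamma in
  asc A B B ∘ (z ⊗ idm B) ∘ asci B A B ∘ (idm B ⊗ z) ∘ asc B B A
  = tensor_mult mA (tensor_mult mB mB) ∘ (((eA ⊗ idm (B ⊠ B)) ∘ lui (B ⊠ B)) ⊗ (asc A B B ∘ (gamma ⊗ idm B) ∘ gamma)).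
Proof. intros z. unfold z, z_of, dot, mAB, tensor_mult. rewrite !br_ten_l. strict.
  swl 3. swl 2. lrw (Smlu HA _). cl. swl 6. swl 5. lrw1 B (Smlu HA _). cl.
  swr 6. swr 5. swr 4. swr 3. swr 2. lrw (Smlu HA _). cl.
  swl 3. lrw1 B (SB12 B gamma _). swl 2. swl 3. reflexivity.
Qed.
Lemma eq4 : let z := z_of mA eA mB gamma in let d := d_of mA eA mB del tau in
  (mA ⊗ idm (B ⊠ B)) ∘ asci A A (B ⊠ B)
       ∘ (idm A ⊗ asc A B B) ∘ (idm A ⊗ (z ⊗ idm B)) ∘ (idm A ⊗ asci B A B)
       ∘ (idm A ⊗ (idm B ⊗ z)) ∘ (idm A ⊗ asc B B A) ∘ asc A (B ⊠ B) A
       ∘ (d ⊗ idm A)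
     = (mA ⊗ idm (B ⊠ B)) ∘ asci A A (B ⊠ B) ∘ (idm A ⊗ d) ∘ z.
Proof.
  intros z d.
  assert (Zd : z = tensor_mult mA mB ∘ (((eA ⊗ idm B) ∘ lui B) ⊗ gamma)) by reflexivity. rl Zd.
  assert (Dd : d = tensor_mult mA (tensor_mult mB mB) ∘ (((eA ⊗ del) ∘ lui B) ⊗ tau) ∘ rui B) by reflexivity. rl Dd.
  pose proof LZ2 as LZ. cbv zeta in LZ. fold z in LZ. rl LZ.
  pose proof (tm_LJ mA HB2) as LJ. rl LJ.
  pose proof (tm_JI HA HB2) as JI. rl JI.
  pose proof (tm_assoc HA HB2) as AS. rl AS.
  destruct HT as [_ [_ [Hco _]]]. unfold dot, mABB, mBB in Hco. rl Hco.
  destruct HB as [_ [_ [Hdm _]]].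
  pose proof (proj1 (tm_fg (id_morph mA eA) Hdm)) as DM. unfold mBB in DM. rl DM.
  strict.
  lrw1 A (LZ _). lrw (eq_sym (LJ _)). swl 3. swl 2. lrw (eq_sym (AS _)). lrw (JI _). cl.
  lrw (Dd _). swl 3. swl 2. lrw (AS _). swl 4. swl 3. swl 2. swl 5. swl 4. swl 3. swl 6. swl 5. lrw1 B (Hco _).
  lrw (Dd _). lrw (Zd _). swr 3. swr 2. lrw (eq_sym (AS _)). lrw (JI _). cl. swr 3. lrw (DM _). lrw (AS _).
  swr 5. swr 4. swr 3. swr 2. swr 3. swr 6. reflexivity.
Qed.
Lemma KPsi : let d := d_of mA eA mB del tau in
  (mA ⊗ idm (B ⊠ B ⊠ B)) ∘ asci A A (B ⊠ B ⊠ B)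
       ∘ (idm A ⊗ (idm A ⊗ asc B B B)) ∘ (idm A ⊗ asc A (B ⊠ B) B)
       ∘ (idm A ⊗ (d ⊗ idm B))
  = tensor_mult mA (tensor_mult mB (tensor_mult mB mB))
     ∘ ((idm A ⊗ (asc B B B ∘ (del ⊗ idm B)))
        ⊗ ((idm A ⊗ asc B B B) ∘ asc A (B ⊠ B) B ∘ (tau ⊗ eB) ∘ lui tunit)) ∘ rui (A ⊠ B ⊠ B).
Proof. intros d. unfold d, d_of, dot, mABB, mBB, tensor_mult. rewrite !br_ten_l. strict.
  swl 7. swl 6. swl 5. swl 4. swl 3. lrw1 A (Smlu HA _). cl. swl 7.
  swr 7. swr 8. swr 5. swr 6. swr 7. swr 10. swr 9. swr 8.
  lrw2 A B (SBt B tau _). swr 9. swr 8. swr 7. swr 6. swr 5.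
  lrw6 A A B B B B (Smru HBm _). cl. swl 7. reflexivity.
Qed.
Lemma KU : let d := d_of mA eA mB del tau in let z := z_of mA eA mB gamma in
  (mA ⊗ idm (B ⊠ B ⊠ B)) ∘ asci A A (B ⊠ B ⊠ B)
       ∘ (idm A ⊗ asc A B (B ⊠ B)) ∘ (idm A ⊗ (z ⊗ idm (B ⊠ B)))
       ∘ (idm A ⊗ asci B A (B ⊠ B)) ∘ (idm A ⊗ (idm B ⊗ d))
  = tensor_mult mA (tensor_mult mB (tensor_mult mB mB))
     ∘ ((idm A ⊗ (idm B ⊗ del)) ⊗ (asc A B (B ⊠ B) ∘ (gamma ⊗ idm (B ⊠ B)) ∘ tau)) ∘ rui (A ⊠ B ⊠ B).
Proof. intros d z. unfold d, z, d_of, z_of, dot, mABB, mBB, mAB, tensor_mult. rewrite !br_ten_l. strict.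
  swl 12. swl 11. swl 10. swl 9. swl 8. lrw2 A B (Smlu HA _). cl. swl 4. swl 3. lrw1 A (Smlu HA _). cl.
  swl 4. swl 5. swl 6. lrw2 A B (SB12 B gamma _). lrw3 A B B (SB12 B gamma _). swl 11.
  swl 3. swl 4. swl 5. swl 6. swl 8. swl 7. reflexivity.
Qed.
Lemma eq5 : let z := z_of mA eA mB gamma in let d := d_of mA eA mB del tau in
  (mA ⊗ idm (B ⊠ B ⊠ B)) ∘ asci A A (B ⊠ B ⊠ B)
       ∘ (idm A ⊗ (idm A ⊗ asc B B B)) ∘ (idm A ⊗ asc A (B ⊠ B) B)
       ∘ (idm A ⊗ (d ⊗ idm B)) ∘ d
     = (mA ⊗ idm (B ⊠ B ⊠ B)) ∘ asci A A (B ⊠ B ⊠ B)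
       ∘ (idm A ⊗ asc A B (B ⊠ B)) ∘ (idm A ⊗ (z ⊗ idm (B ⊠ B)))
       ∘ (idm A ⊗ asci B A (B ⊠ B)) ∘ (idm A ⊗ (idm B ⊗ d)) ∘ d.
Proof.
  intros z d.
  assert (Dd : d = tensor_mult mA (tensor_mult mB mB) ∘ (((eA ⊗ del) ∘ lui B) ⊗ tau) ∘ rui B) by reflexivity. rl Dd.
  pose proof KPsi as KP. cbv zeta in KP. fold d in KP. rl KP.
  pose proof KU as KV. cbv zeta in KV. fold d z in KV. rl KV.
  pose proof (tm_assoc HA HB3) as AS. rl AS.
  destruct HB as [HBm' [[Hcoa _] [Hdm _]]].
  pose proof (proj1 (tm_fg (id_morph mA eA) (morph_comp (tm_fg Hdm (id_morph mB eB)) (tm_asc mB eB mB eB mB eB)))) as PH.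
  rl PH.
  pose proof (proj1 (tm_fg (id_morph mA eA) (tm_fg (id_morph mB eB) Hdm))) as PH'. rl PH'.
  rl Hcoa.
  destruct HT as [_ [_ [_ [Hcy _]]]]. unfold dot, mABBB, mBBB, mBB in Hcy. rl Hcy.
  strict.
  lrw (KP _). swl 4. swl 3. lrw (Dd _). lrw (PH _). lrw (AS _).
  swl 4. swl 3. swl 2. swl 3. swl 5. swl 4. lrw (Hcoa _). lrw1 B (Hcy _).
  lrw (KV _). swr 4. swr 3. lrw (Dd _). lrw (PH' _). lrw (AS _).
  swr 4. swr 3. swr 2. swr 3. swr 5. swr 4. reflexivity.
Qed.
End P.

Unset Implicit Arguments.
Theorem proposition4p2 (C : BMC) (HC : is_braided_monoidal C)
    (A B : Ob C) (mA : Hom (A ⊠ A) A) (eA : Hom tunit A)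
    (mB : Hom (B ⊠ B) B) (eB : Hom tunit B)
    (del : Hom B (B ⊠ B)) (eps : Hom B tunit)
    (gamma : Hom A (A ⊠ B)) (tau : Hom tunit (A ⊠ B ⊠ B)) :
  is_monoid mA eA ->
  is_bimonoid mB eB del eps ->
  is_twisted_coaction mA eA mB eB del eps gamma tau ->
  is_mixed_opwreath mA eA
    (d_of mA eA mB del tau) (w_of eA eps) (z_of mA eA mB gamma).
Proof.
  intros HA HB HT. unfold is_mixed_opwreath.
  split; [exact (eq1 HA HB HT)|].
  split; [exact (eq2 HA HB HT)|].
  split; [exact (eq3 HA HB HT)|].
  split; [exact (eq4 HA HB HT)|].
  split; [exact (eq5 HA HB HT)|].
  split; [exact (eq6 HA HB HT)|].
  exact (eq7 HA HB HT).
Qed.
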